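(* Let $X$ be a one- or two-sided subshift with $\mathcal L(X)=\mathcal L(\tilde X)$, and let $w=w_0w_1\dots w_n$ be a block in $\mathcal L(X)$. Then there exists a unique path $\alpha_0\to\alpha_1\to\dots\to\alpha_n$ in the HB diagram of $X$ with $\alpha_0=w_0$ and $\hat\pi(\alpha_0\alpha_1\dots\alpha_n)=w$.
   Context: Let $\mathcal A$ be a finite alphabet and $\sigma$ the shift, $(\sigma x)_i=x_{i+1}$. A one-sided subshift is a nonempty closed $\sigma$-invariant $X^+\subseteq\mathcal A^{\mathbb N}$; its natural extension is $\tilde X=\{x\in\mathcal A^{\mathbb Z}: x_px_{p+1}\dots\in X^+ \text{ for all } p\in\mathbb Z\}$. For a two-sided subshift $X\subseteq\mathcal A^{\mathbb Z}$, $X^+$ is the set of right rays $x_0x_1\dots$ of points of $X$, so $\tilde X=X$. $\mathcal L(Y)$ denotes the set of finite blocks occurring in points of $Y$. For $a_{-n}\dots a_0\in\mathcal L(\tilde X)$, $\mathrm{fol}(a_{-n}\dots a_0)=\{b_0b_1\dots\in X^+:\exists b\in\tilde X \text{ with } b_{-n}\dots b_0=a_{-n}\dots a_0\}$. A block $a_{-n}\dots a_0\in\mathcal L(\tilde X)$ with $n\ge1$ is significant if $\mathrm{fol}(a_{-n}\dots a_0)\subsetneq\mathrm{fol}(a_{-n+1}\dots a_0)$; single symbols in $\mathcal L(\tilde X)$ are also counted as significant. $\mathrm{sig}(a_{-n}\dots a_0)$ is the longest significant suffix. The HB diagram has vertex set the significant blocks of $\tilde X$ and an arrow $\alpha\to\beta$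 iff there is a symbol $b$ with $\alpha b\in\mathcal L(\tilde X)$ and $\beta=\mathrm{sig}(\alpha b)$. For a finite path $\alpha_0\to\dots\to\alpha_n$, $\hat\pi(\alpha_0\dots\alpha_n)=a_0\dots a_n$ where $a_i$ is the last symbol of $\alpha_i$. *)

(* Defs.v *)
From mathcomp Require Import all_boot all_order all_algebra.
Set Implicit Arguments. Unset Strict Implicit. Unset Printing Implicit Defensive.
Import GRing.Theory Num.Theory.
Local Open Scope ring_scope.

Section Shifts.
Variable A : finType.

Definition oshift (x : nat -> A) : nat -> A := fun i => x i.+1.
Definition tshift (x : int -> A) : int -> A := fun i => x (i + 1).
Definition tshift_inv (x : int -> A) : int -> A := fun i => x (i - 1).

(* closedness in the product topology *)
Definition oclosed (X : (nat -> A) -> Prop) : Prop :=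
  forall x, (forall n : nat, exists y, X y /\ forall i : nat, (i < n)%N -> y i = x i) -> X x.
Definition tclosed (X : (int -> A) -> Prop) : Prop :=
  forall x, (forall n : nat, exists y, X y /\
     forall i : int, - (n%:Z) <= i <= n%:Z -> y i = x i) -> X x.

Definition osubshift (X : (nat -> A) -> Prop) : Prop :=
  (exists x, X x) /\ oclosed X /\ (forall x, X x -> X (oshift x)).
Definition tsubshift (X : (int -> A) -> Prop) : Prop :=
  (exists x, X x) /\ tclosed X /\
  (forall x, X x -> X (tshift x)) /\ (forall x, X x -> X (tshift_inv x)).

Definition natext (X : (nat -> A) -> Prop) : (int -> A) -> Prop :=
  fun x => forall p : int, X (fun k : nat => x (p + k%:Z)).

Definition rays (X : (int -> A) -> Prop) : (nat -> A) -> Prop :=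
  fun y => exists x, X x /\ forall k : nat, y k = x k%:Z.

Definition oL (X : (nat -> A) -> Prop) (w : seq A) : Prop :=
  exists x (i : nat), X x /\ w = mkseq (fun k => x (i + k)%N) (size w).
Definition tL (X : (int -> A) -> Prop) (w : seq A) : Prop :=
  exists x (i : int), X x /\ w = mkseq (fun k => x (i + k%:Z)) (size w).

(* The HB diagram is determined by the pair (Xp, Xt) = (X^+, \tilde X). *)
Section HB.
Variables (Xp : (nat -> A) -> Prop) (Xt : (int -> A) -> Prop).

(* fol(a_{-n} ... a_0), with a = [:: a_{-n}; ...; a_0], n = size a - 1 *)
Definition fol (a : seq A) : (nat -> A) -> Prop :=
  fun y => Xp y /\ exists b, Xt b /\
    a = mkseq (fun k => b (k%:Z - (size a).-1%:Z)) (size a) /\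
    forall k : nat, b k%:Z = y k.

Definition subpred (P Q : (nat -> A) -> Prop) := forall y, P y -> Q y.

Definition significant (a : seq A) : Prop :=
  tL Xt a /\
  (size a = 1%N \/
   ((2 <= size a)%N /\ subpred (fol a) (fol (behead a)) /\
    ~ subpred (fol (behead a)) (fol a))).

Definition is_sig (w s : seq A) : Prop :=
  suffix s w /\ significant s /\
  forall s', suffix s' w -> significant s' -> (size s' <= size s)%N.

Definition hb_arrow (alpha beta : seq A) : Prop :=
  significant alpha /\ significant beta /\
  exists c : A, tL Xt (rcons alpha c) /\ is_sig (rcons alpha c) beta.

Definition hb_path (p : seq (seq A)) : Prop :=
  (0 < size p)%N /\ (forall a, a \in p -> significant a) /\
  forall i : nat, (i.+1 < size p)%N -> hb_arrow (nth [::] p i) (nth [::] p i.+1).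

End HB.

(* \hat\pi: last symbols of the vertices (vertices are nonempty, so the
   default x0 is never used) *)
Definition pihat (x0 : A) (p : seq (seq A)) : seq A := map (last x0) p.

End Shifts.

(* Main.v *)
Require Import Defs.
From mathcomp Require Import all_boot all_order all_algebra.
From mathcomp Require Import zify.
From Stdlib Require Import Classical FunctionalExtensionality.
Set Implicit Arguments. Unset Strict Implicit. Unset Printing Implicit Defensive.
Import GRing.Theory Num.Theory.

Section Helpers.
Local Open Scope ring_scope.

Definition win (A : finType) (a : seq A) (b : int -> A) :=
  a = mkseq (fun k : nat => b (k%:Z + 1 - (size a)%:Z)) (size a).

Definition GG (A : finType) (Xt : (int -> A) -> Prop) (a : seq A) (y : nat -> A) :=
  exists b, Xt b /\ win a b /\ forall k : nat, b k%:Z = y k.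

Lemma nth_eqmk (T : Type) (d : T) (a : seq T) f :
  a = mkseq f (size a) -> forall k, (k < size a)%N -> nth d a k = f k.
Proof. by move=> H k Hk; rewrite H nth_mkseq. Qed.

Lemma mk_eqnth (T : Type) (d : T) (a : seq T) f :
  (forall k, (k < size a)%N -> nth d a k = f k) -> a = mkseq f (size a).
Proof.
move=> H; apply: (@eq_from_nth _ d); rewrite ?size_mkseq // => k Hk.
by rewrite nth_mkseq // H.
Qed.

Lemma Xt_shift (A : finType) (Xt : (int -> A) -> Prop)
  (H2 : forall b, Xt b -> Xt (tshift b)) (H3 : forall b, Xt b -> Xt (tshift_inv b))
  b z : Xt b -> Xt (fun j => b (j + z)).
Proof.
move=> Xb.
have P : forall n : nat, Xt (fun j => b (j + n%:Z)).
  elim=> [|n IH].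
    have -> : (fun j => b (j + 0%:Z)) = b by apply: functional_extensionality => j; rewrite addr0.
    done.
  have -> : (fun j => b (j + n.+1%:Z)) = tshift (fun j => b (j + n%:Z)).
    by apply: functional_extensionality => j; rewrite /tshift; congr b; lia.
  exact: H2.
have N : forall n : nat, Xt (fun j => b (j - n%:Z)).
  elim=> [|n IH].
    have -> : (fun j => b (j - 0%:Z)) = b by apply: functional_extensionality => j; rewrite subr0.
    done.
  have -> : (fun j => b (j - n.+1%:Z)) = tshift_inv (fun j => b (j - n%:Z)).
    by apply: functional_extensionality => j; rewrite /tshift_inv; congr b; lia.
  exact: H3.
case: z => n; first exact: P.
have -> : (fun j => b (j + Negz n)) = (fun j => b (j - n.+1%:Z)).
  by apply: functional_extensionality => j; rewrite NegzE.
exact: N.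
Qed.

Lemma G_tL (A : finType) Xt (a : seq A) y : GG Xt a y -> tL Xt a.
Proof.
case=> b [Xb [W _]]; exists b, (1 - (size a)%:Z); split=> //.
apply: (@mk_eqnth _ (b 0) a) => k Hk; rewrite (nth_eqmk (b 0) W) //.
congr b; lia.
Qed.

Lemma tL_G (A : finType) (Xt : (int -> A) -> Prop)
  (H2 : forall b, Xt b -> Xt (tshift b)) (H3 : forall b, Xt b -> Xt (tshift_inv b))
  a : tL Xt a -> exists y, GG Xt a y.
Proof.
case=> x [i [Xx E]].
pose b := fun j => x (j + (i + (size a)%:Z - 1)).
exists (fun k : nat => b k%:Z), b; split; first exact: (Xt_shift H2 H3).
split=> //.
apply: (@mk_eqnth _ (b 0) a) => k Hk; rewrite (nth_eqmk (b 0) E) // /b.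
congr x; lia.
Qed.

Lemma G_suffix (A : finType) Xt (a s : seq A) y :
  GG Xt a y -> suffix s a -> GG Xt s y.
Proof.
case=> b [Xb [W R]] /suffixP [t Ea]; exists b; split=> //; split=> //.
apply: (@mk_eqnth _ (b 0) s) => k Hk.
have Hk' : (size t + k < size a)%N by rewrite Ea size_cat ltn_add2l.
have := nth_eqmk (b 0) W Hk'.
rewrite Ea nth_cat ltnNge leq_addr /= addKn size_cat => ->.
congr b; lia.
Qed.

Lemma G_rcons (A : finType) (Xt : (int -> A) -> Prop)
  (H2 : forall b, Xt b -> Xt (tshift b)) (H3 : forall b, Xt b -> Xt (tshift_inv b))
  (u v : seq A) c :
  (forall y, GG Xt u y -> GG Xt v y) ->
  forall y, GG Xt (rcons u c) y -> GG Xt (rcons v c) y.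
Proof.
move=> Huv y [b [Xb [W R]]].
pose b' := fun j => b (j + (-1)).
have Xb' : Xt b' by exact: (Xt_shift H2 H3).
have Wu : win u b'.
  apply: (@mk_eqnth _ (b 0) u) => k Hk.
  have Hk' : (k < size (rcons u c))%N by rewrite size_rcons ltnS ltnW.
  have E := nth_eqmk (b 0) W Hk'.
  rewrite nth_rcons Hk size_rcons in E; rewrite E /b'; congr b; lia.
have Ec : c = b 0.
  have Hk' : (size u < size (rcons u c))%N by rewrite size_rcons.
  have E := nth_eqmk (b 0) W Hk'.
  rewrite nth_rcons ltnn eqxx size_rcons in E; rewrite E; congr b; lia.
have [b'' [Xb'' [Wv R'']]] :=
  Huv (fun k : nat => b' k%:Z) (ex_intro _ b' (conj Xb' (conj Wu (fun _ => erefl)))).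
exists (fun j => b'' (j + 1)); split; first exact: (Xt_shift H2 H3).
split.
  apply: (@mk_eqnth _ (b 0) (rcons v c)) => k; rewrite size_rcons ltnS leq_eqVlt => /orP [/eqP -> | Hk].
    rewrite nth_rcons ltnn eqxx Ec.
    have -> : (size v)%:Z + 1 - (size v).+1%:Z + 1 = (1%N)%:Z by lia.
    rewrite R'' /b'; congr b.
  by rewrite nth_rcons Hk (nth_eqmk (b 0) Wv Hk); congr b''; lia.
move=> k /=.
have -> : k%:Z + 1 = (k.+1)%:Z by lia.
rewrite R'' /b'.
have -> : k.+1%:Z + -1 = k%:Z by lia.
exact: R.
Qed.

End Helpers.

Lemma tL_prefix (A : finType) Xt (w : seq A) c : tL Xt (rcons w c) -> tL Xt w.
Proof.
case=> x [i [Xx E]]; exists x, i; split=> //.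
apply: (@mk_eqnth _ (x 0%R) w) => k Hk.
have Hk' : (k < size (rcons w c))%N by rewrite size_rcons ltnS ltnW.
have E' := nth_eqmk (x 0%R) E Hk'.
by rewrite nth_rcons Hk in E'.
Qed.

Lemma ex_min_cl (P : nat -> Prop) n : P n -> exists k, P k /\ forall j, P j -> (k <= j)%N.
Proof.
elim/ltn_ind: n => n IH Pn.
case: (classic (exists j, P j /\ (j < n)%N)) => [[j [Pj jn]]|N].
  exact: IH j jn Pj.
exists n; split=> // j Pj; rewrite leqNgt; apply/negP => jn; apply: N; by exists j.
Qed.

Lemma sig_ex (A : finType) Xp Xt (u : seq A) c :
  tL Xt [:: c] -> exists s, is_sig Xp Xt (rcons u c) s.
Proof.
move=> Hc; set w := rcons u c.
have P0 : significant Xp Xt (drop (size u) w).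
  rewrite /w -cats1 drop_size_cat //; split=> //; by left.
have [k [Pk Hmin]] := @ex_min_cl (fun k => significant Xp Xt (drop k w)) _ P0.
exists (drop k w); split; first exact: suffix_drop.
split=> // s' Hs' Ss'.
have Es' : s' = drop (size w - size s') w by move: Hs'; rewrite suffixE => /eqP.
have Hsz := congr1 size Es'; rewrite size_drop in Hsz.
rewrite Es' in Ss'.
have L : forall a b k0 d : nat, d = a - k0 -> b = a - (a - b) -> k0 <= a - b -> b <= d by move=> *; lia.
exact: (L _ _ _ _ (size_drop k w) Hsz (Hmin _ Ss')).
Qed.

Lemma sig_uniq (A : finType) Xp Xt (w s1 s2 : seq A) :
  is_sig Xp Xt w s1 -> is_sig Xp Xt w s2 -> s1 = s2.
Proof.
move=> [Su1 [Sg1 M1]] [Su2 [Sg2 M2]].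
have e : size s1 = size s2 by apply/eqP; rewrite eqn_leq M2 // M1.
move: Su1 Su2; rewrite !suffixE e => /eqP E1 /eqP E2.
by rewrite -{1}E1; exact E2.
Qed.

Lemma sig_size (A : finType) Xp Xt (a : seq A) : significant Xp Xt a -> (0 < size a)%N.
Proof. by case=> _ [->|[H _]] //; exact: leq_trans H. Qed.

Lemma sig_last (A : finType) Xp Xt (u be : seq A) c d :
  is_sig Xp Xt (rcons u c) be -> last d be = c.
Proof.
move=> [Su [Sg _]]; have Hne := sig_size Sg.
case/suffixP: Su => t E.
have := congr1 (last d) E; rewrite last_rcons last_cat.
by case: be Hne {E Sg} => // e b' _ /= ->.
Qed.

Lemma head_rcons_ne T (d : T) s x : (0 < size s)%N -> head d (rcons s x) = head d s.
Proof. by case: s. Qed.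

Lemma ex_part (A : finType) Xp (Xt : (int -> A) -> Prop)
  (H2 : forall b, Xt b -> Xt (tshift b)) (H3 : forall b, Xt b -> Xt (tshift_inv b))
  w0 ws : tL Xt (w0 :: ws) ->
  exists p, (hb_path Xp Xt p /\ head [::] p = [:: w0] /\ pihat w0 p = w0 :: ws) /\
    forall y, GG Xt (w0 :: ws) y -> GG Xt (last [::] p) y.
Proof.
elim/last_ind: ws => [|ws c IH] H.
  exists [:: [:: w0]]; split; last by [].
  split; last by [].
  split=> //; split=> //.
  by move=> a; rewrite inE => /eqP ->; split=> //; left.
have H' : tL Xt (w0 :: ws) by apply: (@tL_prefix _ _ _ c).
have [p [[Pp [Hh Hpi]] HG]] := IH H'.
set al := last [::] p.
have HG' := G_rcons H2 H3 (c := c) HG.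
have [y Gy] := tL_G H2 H3 H.
have Gal := HG' y Gy.
have tLal := G_tL Gal.
have tLc : tL Xt [:: c].
  apply: (G_tL (y := y)); apply: (G_suffix Gal).
  by rewrite -cats1; exact: suffix_suffix.
have [be Sbe] := sig_ex Xp al tLc.
have pne := Pp.1.
exists (rcons p be); split.
  split.
    split; first by rewrite size_rcons.
    split.
      move=> a; rewrite mem_rcons inE => /orP[/eqP->|]; first exact: Sbe.2.1.
      exact: Pp.2.1 a.
    move=> i; rewrite size_rcons ltnS leq_eqVlt => /orP[/eqP Ei | Hi].
      rewrite !nth_rcons -Ei ltnSn ltnn eqxx.
      have Eal : nth [::] p i = al by rewrite /al -nth_last -Ei.
      rewrite Eal; split.
        apply: Pp.2.1; rewrite -Eal; apply: mem_nth; by rewrite -Ei.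
      split; first exact: Sbe.2.1.
      by exists c; split.
    rewrite !nth_rcons Hi (ltnW Hi); exact: Pp.2.2 i Hi.
  split; first by rewrite head_rcons_ne.
  rewrite /pihat map_rcons; rewrite /pihat in Hpi; rewrite Hpi (sig_last _ Sbe) //.
rewrite last_rcons => y0 Gy0; exact: G_suffix (HG' _ Gy0) Sbe.1.
Qed.

Lemma uniq_part (A : finType) Xp (Xt : (int -> A) -> Prop) w0 ws p q :
  (hb_path Xp Xt p /\ head [::] p = [:: w0] /\ pihat w0 p = w0 :: ws) ->
  (hb_path Xp Xt q /\ head [::] q = [:: w0] /\ pihat w0 q = w0 :: ws) -> p = q.
Proof.
move=> [Pp [Hh Hpi]] [Pq [Hh' Hpi']].
have Esz : size p = size q.
  by have := congr1 size Hpi; have := congr1 size Hpi'; rewrite /pihat !size_map => -> ->.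
apply: (@eq_from_nth _ [::]) => // i.
elim: i => [|i IH] Hi; first by rewrite !nth0 Hh Hh'.
have IH' := IH (ltnW Hi).
have [_ [_ [c1 [_ S1]]]] := Pp.2.2 i Hi.
have Hi' : (i.+1 < size q)%N by rewrite -Esz.
have [_ [_ [c2 [_ S2]]]] := Pq.2.2 i Hi'.
have L1 : nth w0 (pihat w0 p) i.+1 = c1 by rewrite /pihat (nth_map [::]) // (sig_last _ S1).
have L2 : nth w0 (pihat w0 q) i.+1 = c2 by rewrite /pihat (nth_map [::]) // (sig_last _ S2).
rewrite Hpi in L1; rewrite Hpi' in L2.
have e : c1 = c2 by rewrite -L1 -L2.
rewrite IH' e in S1; exact: sig_uniq S1 S2.
Qed.

Lemma main_gen (A : finType) Xp (Xt : (int -> A) -> Prop)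
  (H2 : forall b, Xt b -> Xt (tshift b)) (H3 : forall b, Xt b -> Xt (tshift_inv b))
  w0 ws : tL Xt (w0 :: ws) ->
  exists! p, hb_path Xp Xt p /\ head [::] p = [:: w0] /\ pihat w0 p = w0 :: ws.
Proof.
move=> H; have [p [Pp _]] := ex_part Xp H2 H3 H.
exists p; split=> // q Pq; exact: uniq_part Pp Pq.
Qed.

Theorem theorem5p8 (A : finType) :
  (* one-sided case *)
  (forall X : (nat -> A) -> Prop,
     osubshift X ->
     (forall u, oL X u <-> tL (natext X) u) ->
     forall (w0 : A) (ws : seq A), oL X (w0 :: ws) ->
     exists! p : seq (seq A),
       hb_path X (natext X) p /\ head [::] p = [:: w0] /\
       pihat w0 p = w0 :: ws)
  /\
  (* two-sided case: X^+ = right rays of X, \tilde X = X *)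
  (forall X : (int -> A) -> Prop,
     tsubshift X ->
     forall (w0 : A) (ws : seq A), tL X (w0 :: ws) ->
     exists! p : seq (seq A),
       hb_path (rays X) X p /\ head [::] p = [:: w0] /\
       pihat w0 p = w0 :: ws).
Proof.
split.
  move=> X _ HL w0 ws Hw; apply: main_gen; last by apply/HL.
    move=> b Nb p.
    have -> : (fun k : nat => tshift b (p + k%:Z)) = (fun k : nat => b ((p + 1) + k%:Z))%R.
      by apply: functional_extensionality => k; rewrite /tshift; congr b; lia.
    exact: Nb.
  move=> b Nb p.
  have -> : (fun k : nat => tshift_inv b (p + k%:Z)) = (fun k : nat => b ((p - 1) + k%:Z))%R.
    by apply: functional_extensionality => k; rewrite /tshift_inv; congr b; lia.
  exact: Nb.
move=> X [_ [_ [T1 T2]]] w0 ws Hw; exact: main_gen.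
Qed.
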